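(* Let $n_1,n_2,n_3$ be pairwise coprime positive integers forming a minimal system of generators of $\mathcal S=\langle n_1,n_2,n_3\rangle$, and let $\{i,j,k\}=\{1,2,3\}$. If $$n_j\ \ge\ [-n_in_k^{-1}]_{n_j}\left(\left\lfloor\frac{n_k}{[n_in_j^{-1}]_{n_k}}\right\rfloor+1\right),$$ then $$c_k=n_j-[-n_in_k^{-1}]_{n_j}\left\lfloor\frac{n_k}{[n_in_j^{-1}]_{n_k}}\right\rfloor .$$
   Context: $\mathbb N$ denotes the nonnegative integers. For integers $a_1,\dots,a_r$, $\langle a_1,\dots,a_r\rangle=\{\sum t_la_l: t_l\in\mathbb N\}$. Minimal system of generators means that no $n_l$ belongs to the monoid generated by the other two. For an integer $m$ and $n\ge 1$, $[m]_n\in\{0,\dots,n-1\}$ denotes the remainder of $m$ upon division by $n$; for $a$ coprime to $n$, the symbol $a^{-1}$ inside $[\cdot]_n$ denotes a multiplicative inverse of $a$ modulo $n$. For $\{i,j,k\}=\{1,2,3\}$, $\mathcal S_k=\{M\in\mathbb N: Mn_k\in\langle n_i,n_j\rangle\}$ and $c_k=\min(\mathcal S_k\setminus\{0\})$ (the minimal relation for $n_k$). *)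

(* Defs.v *)
From mathcomp Require Import all_boot.
Set Implicit Arguments. Unset Strict Implicit. Unset Printing Implicit Defensive.

Definition in_monoid2 (a b x : nat) : Prop := exists t u : nat, x = t * a + u * b.

Definition minimal_gens (n : 'I_3 -> nat) : Prop :=
  forall l m p : 'I_3, l != m -> m != p -> l != p -> ~ in_monoid2 (n m) (n p) (n l).

Definition S_set (n : 'I_3 -> nat) (i j k : 'I_3) (M : nat) : Prop :=
  in_monoid2 (n i) (n j) (M * n k).

Definition is_c (n : 'I_3 -> nat) (i j k : 'I_3) (c : nat) : Prop :=
  [/\ 0 < c, S_set n i j k c & forall M, 0 < M -> S_set n i j k M -> c <= M].

(* a multiplicative inverse of a modulo m, taken in {0,...,m-1}
   (well defined when coprime a m and m >= 2) *)
Definition inv_mod (a m : nat) : nat :=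
  find (fun x => a * x %% m == 1 %% m) (iota 0 m).

Definition negmod (x m : nat) : nat := (m - x %% m) %% m.

(* Main.v *)
Require Import Defs.
From mathcomp Require Import all_boot zify.

Lemma inv_mod_spec a m : 1 < m -> 0 < a -> coprime a m ->
  exists e, a * inv_mod a m = e * m + 1.
Proof.
move=> m1 a0 co.
have hex : has (fun x => a * x %% m == 1 %% m) (iota 0 m).
  move/(coprimeP _ a0): co => [[s t] /= h].
  apply/hasP; exists (s %% m); first by rewrite mem_iota /= ltn_mod; lia.
  rewrite modnMmr; apply/eqP.
  have -> : a * s = t * m + 1 by lia.
  by rewrite modnMDl.
have := nth_find 0 hex; rewrite -/(inv_mod a m).
have hlt : inv_mod a m < m by by move: (hex); rewrite has_find size_iota.
rewrite nth_iota // add0n (modn_small m1) => /eqP h.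
exists (a * inv_mod a m %/ m); by rewrite {1}(divn_eq (a * inv_mod a m) m) h.
Qed.

Lemma main_arith (A B C u v q M t s m : nat) :
  0 < A -> 0 < B -> 0 < C -> 0 < v -> 0 < M -> 0 < u ->
  v * B = u * C + A -> u * q.+1 <= B -> C < q.+1 * v ->
  M + t * u = m * B -> m * C = t * v + s -> B - u * q <= M.
Proof.
move=> A0 B0 C0 v0 M0 u0 idv hyp hq hm hmc.
rewrite leqNgt; apply/negP => hlt.
have m0 : 0 < m by case: m hm {hmc} => //; lia.
have ht : m * q.+1 <= t.
  rewrite leqNgt; apply/negP => ht.
  have h1 : t * u <= (m * q.+1).-1 * u by apply: leq_mul => //; lia.
  have h2 : (m * q.+1).-1 * u = (m.-1) * (u * q.+1) + u * q.
    case: m m0 {h1 ht hm hmc} => // m' _; rewrite /=. nia.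
  have h3 : m.-1 * (u * q.+1) <= m.-1 * B by apply: leq_mul.
  have h4 : m * B = m.-1 * B + B by case: m m0 {h1 h2 h3 ht hm hmc} => // m' _; rewrite mulSn; lia.
  lia.
have h5 : m * C < m * (q.+1 * v) by rewrite ltn_pmul2l.
have h6 : m * q.+1 * v <= t * v by apply: leq_mul.
rewrite mulnA in h5. lia.
Qed.

Lemma aux1 A B C u w : w*B = u*C + A -> C <= w -> u <= B -> A = (w-C)*B + (B-u)*C.
Proof.
move=> h hw hu; rewrite mulnBl mulnBl.
have : C*B <= w*B by apply: leq_mul.
have : u*C <= B*C by apply: leq_mul.
rewrite (mulnC C B); lia.
Qed.

Lemma aux2 B u q : 0 < B -> u*q.+1 <= B -> 0 < B - u*q.
Proof. move=> B0; rewrite mulnS; case: u => [|u]; rewrite ?mul0n; lia. Qed.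

Lemma aux3 A B C u v q : v*B = u*C+A -> q*v <= C -> u*q.+1 <= B ->
  (B - u*q)*C = q*A + (C - q*v)*B.
Proof.
move=> hv hq hu; rewrite mulnBl mulnBl.
have e : q * v * B = q * (u * C) + q * A by rewrite -mulnA hv mulnDr.
have l1 : u * q * C <= B * C by apply: leq_mul => //; move: hu; rewrite mulnS; lia.
have l2 : q * v * B <= C * B by apply: leq_mul.
rewrite mulnA (mulnC q u) in e; rewrite (mulnC C B) in l2 *; lia.
Qed.

Lemma aux4 M C t A s B u v : M*C = t*A + s*B -> v*B = u*C + A ->
  (M + t*u)*C = (t*v+s)*B.
Proof.
move=> h hv.
have e : t * v * B = t * (u * C) + t * A by rewrite -mulnA hv mulnDr.
rewrite mulnA in e; rewrite !mulnDl h; lia.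
Qed.

Lemma aux5 M m B : 0 < M -> m * B = M -> B <= M.
Proof. case: m => [|m]; rewrite ?mul0n ?mulSn; lia. Qed.

Theorem mainTheorem6 (n : 'I_3 -> nat) (i j k : 'I_3)
  (hpos : forall l, 0 < n l)
  (hcop : forall l m, l != m -> coprime (n l) (n m))
  (hmin : minimal_gens n)
  (hij : i != j) (hjk : j != k) (hik : i != k)
  (hyp : negmod (n i * inv_mod (n k) (n j)) (n j) *
           (n k %/ ((n i * inv_mod (n j) (n k)) %% n k)).+1 <= n j) :
  is_c n i j k
    (n j - negmod (n i * inv_mod (n k) (n j)) (n j) *
             (n k %/ ((n i * inv_mod (n j) (n k)) %% n k))).
Proof.
have hm := hmin i j k hij hjk hik.
have cokj : coprime (n k) (n j) by apply: hcop; rewrite eq_sym.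
have cojk : coprime (n j) (n k) by apply: hcop.
move: hyp hm cokj cojk.
rewrite /is_c /S_set /in_monoid2 /negmod.
have := hpos i; have := hpos j; have := hpos k.
move: (n i) (n j) (n k) => A B C C0 B0 A0.
set x := inv_mod C B; set y := inv_mod B C.
move=> hyp hm cokj cojk.
have B1 : 1 < B.
  case: B B0 {hyp x y cokj cojk} hm => // [[|//]] _ hm.
  by exfalso; apply: hm; exists A, 0; lia.
have C1 : 1 < C.
  case: C C0 {hyp x y cokj cojk} hm => // [[|//]] _ hm.
  by exfalso; apply: hm; exists 0, A; lia.
have [e he] := @inv_mod_spec C B B1 C0 cokj.
have [f hf] := @inv_mod_spec B C C1 B0 cojk.
rewrite -/x in he; rewrite -/y in hf.
set u := (B - A * x %% B) %% B.
set v := A * y %% C.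
move: hyp; rewrite -/u -/v => hyp.
have ult : u < B by rewrite ltn_mod.
have d1 : B %| u + A * x.
  rewrite /dvdn -modnDmr /u.
  case: (posnP (A * x %% B)) => [->|hr]; first by rewrite subn0 modnn add0n mod0n.
  rewrite (@modn_small (B - _)); last by rewrite ltn_subrL hr B0.
  by rewrite subnK ?modnn // ltnW // ltn_mod.
have d2 : B %| u * C + A.
  have : B %| (u + A * x) * C by apply: dvdn_mulr.
  have -> : (u + A * x) * C = (u * C + A) + (A * e) * B.
    by rewrite mulnDl -mulnA (mulnC x) he mulnDr muln1 mulnA [A * e * B + A]addnC addnA.
  by rewrite dvdn_addl // dvdn_mull.
set w := (u * C + A) %/ B.
have hw : w * B = u * C + A by rewrite divnK.
have wmod : w %% C = v.
  have h1 : w * (B * y) = (u * C + A) * y by rewrite mulnA hw.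
  have h : (w * f) * C + w = (u * y) * C + A * y.
    by rewrite hf mulnDr muln1 mulnDl in h1; rewrite -mulnA h1 mulnAC.
  have := congr1 (modn^~ C) h; rewrite /= !modnMDl => ->.
  by [].

have wlt : w < C.
  rewrite ltnNge; apply/negP => hCw; apply: hm.
  exists (w - C), (B - u).
  by apply: aux1 => //; apply: ltnW.
have hv : v * B = u * C + A by rewrite -wmod modn_small.
have v0 : 0 < v.
  rewrite lt0n; apply/negP => /eqP h; rewrite h mul0n in hv.
  have : 0 < u * C + A by rewrite addn_gt0 A0 orbT.
  by rewrite -hv.
set q := C %/ v.
have hq1 : q * v <= C by apply: leq_trunc_div.
have hq2 : C < q.+1 * v by apply: ltn_ceil.
have hyp2 : u * q.+1 <= B := hyp.
clearbody q.
split.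
- by apply: aux2 B0 hyp2.
- by exists q, (C - q * v); apply: aux3 hv hq1 hyp2.
- move=> M M0 [t [s hMs]].
  have e1 : (M + t * u) * C = (t * v + s) * B.
    exact: aux4 hMs hv.
  have : B %| M + t * u by rewrite -(Gauss_dvdl _ cojk) e1 dvdn_mull.
  move/divnK => hm'.
  case: (posnP u) => [u0|u0].
    rewrite u0 mul0n subn0; rewrite u0 muln0 addn0 in hm'.
    by apply: aux5 hm'.
  apply: (@main_arith A B C u v q M t s _ A0 B0 C0 v0 M0 u0 hv hyp2 hq2 (esym hm')).
  apply/eqP; rewrite -(eqn_pmul2r B0) -mulnA (mulnC C) mulnA hm' e1 //.
Qed.
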